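(* Let $\eta$ be an ordinal with $\eta\in\mathcal{H}_\eta(\emptyset)$, and for any ordinal $\beta$ put $\hat\beta:=\eta+\omega^{\Omega+\beta}$. Then: (i) if $\alpha\in\mathcal{H}_\eta(\emptyset)$ then $\hat\alpha\in\mathcal{H}_{\hat\alpha}(\emptyset)$ and $\psi_\Omega(\hat\alpha)\in\mathcal{H}_{\hat\alpha}(\emptyset)$; (ii) if $\alpha_0\in\mathcal{H}_\eta(\emptyset)$ and $\alpha_0<\alpha$ then $\psi_\Omega(\hat{\alpha_0})<\psi_\Omega(\hat\alpha)$.
   Context: Let $\Omega$ be a big ordinal (e.g. $\aleph_1$), and $\varphi$ the binary Veblen function. By transfinite recursion on $\alpha$ define $B^\Omega(\alpha)$ as the closure of $\{0,\Omega\}$ under $+$, $(\xi,\eta)\mapsto\varphi\xi\eta$, and $\xi\mapsto\psi_\Omega(\xi)$ for $\xi<\alpha$; and $\psi_\Omega(\alpha):=\min\{\rho<\Omega:\rho\notin B^\Omega(\alpha)\}$. Let $\varepsilon_{\Omega+1}$ be the least $\eta>\Omega$ with $\omega^\eta=\eta$; all ordinals considered belong to $B^\Omega(\varepsilon_{\Omega+1})$. For each $\eta$ and each set $X$ of such ordinals, $\mathcal{H}_\eta(X):=\bigcap\{B^\Omega(\alpha): X\subseteq B^\Omega(\alpha)\text{ and }\eta<\alpha\}$. *)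

(* Defs.v *)
(* Ordinals are modelled by an abstract "ordinal universe":
   a well-ordered type whose order type is an uncountable regular cardinal
   kappa, together with the element Omega = aleph_1 (= omega_1).  Since kappa
   is regular and > aleph_1, it is an initial segment of the ordinals closed
   under +, *, omega-exponentiation and the binary Veblen function, so all
   the (textbook) recursive definitions below compute the genuine ordinal
   operations on it. *)
From Stdlib Require Import ClassicalEpsilon.

Definition countable_below {O : Type} (lt : O -> O -> Prop) (x : O) : Prop :=
  exists g : O -> nat, forall y z, lt y x -> lt z x -> g y = g z -> y = z.

Record OrdUniverse := {
  carrier :> Type;
  olt : carrier -> carrier -> Prop;
  Omega : carrier;
  olt_trans : forall x y z, olt x y -> olt y z -> olt x z;
  olt_total : forall x y, olt x y \/ x = y \/ olt y x;
  olt_wf : well_founded olt;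
  olt_regular : forall (x : carrier) (f : carrier -> carrier),
      exists b, forall y, olt y x -> olt (f y) b;
  Omega_uncountable : ~ countable_below olt Omega;
  Omega_least : forall x, olt x Omega -> countable_below olt x
}.

Section Ordinals.
Variable U : OrdUniverse.
Local Notation O := (carrier U).
Local Notation "x < y" := (olt U x y).
Definition ole (x y : O) : Prop := x < y \/ x = y.
Local Notation "x <= y" := (ole x y).

Definition inhO : inhabited O := inhabits (Omega U).

(* least element satisfying P (arbitrary if there is none) *)
Definition omin (P : O -> Prop) : O :=
  epsilon inhO (fun x => P x /\ forall y, P y -> x <= y).

Definition ozero : O := omin (fun _ => True).
Definition osucc (x : O) : O := omin (fun y => x < y).
Definition oone : O := osucc ozero.
Definition is_limit (b : O) : Prop := b <> ozero /\ forall c, b <> osucc c.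
Definition oomega : O := omin is_limit.
Definition osup (S : O -> Prop) : O := omin (fun u => forall g, S g -> g <= u).

Definition inhF : inhabited (O -> O -> O) := inhabits (fun _ _ => Omega U).
Definition inhF1 : inhabited (O -> O) := inhabits (fun _ => Omega U).

Definition oadd : O -> O -> O := epsilon inhF (fun f => forall a,
  f a ozero = a /\ (forall c, f a (osucc c) = osucc (f a c)) /\
  (forall b, is_limit b -> f a b = osup (fun g => exists c, c < b /\ g = f a c))).

Definition omul : O -> O -> O := epsilon inhF (fun f => forall a,
  f a ozero = ozero /\ (forall c, f a (osucc c) = oadd (f a c) a) /\
  (forall b, is_limit b -> f a b = osup (fun g => exists c, c < b /\ g = f a c))).

Definition oexp : O -> O := epsilon inhF1 (fun f =>
  f ozero = oone /\ (forall c, f (osucc c) = omul (f c) oomega) /\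
  (forall b, is_limit b -> f b = osup (fun g => exists c, c < b /\ g = f c))).

Definition oenum (S : O -> Prop) : O -> O := epsilon inhF1 (fun f =>
  forall b, f b = omin (fun g => S g /\ forall c, c < b -> f c < g)).

Definition phi : O -> O -> O := epsilon inhF (fun F =>
  F ozero = oexp /\
  forall x, ozero < x -> F x = oenum (fun g => forall z, z < x -> F z g = g)).

(* B^Omega(a) relative to a candidate collapsing function p *)
Inductive Bclos (p : O -> O) (a : O) : O -> Prop :=
| Bclos_zero : Bclos p a ozero
| Bclos_Omega : Bclos p a (Omega U)
| Bclos_add : forall x y, Bclos p a x -> Bclos p a y -> Bclos p a (oadd x y)
| Bclos_phi : forall x y, Bclos p a x -> Bclos p a y -> Bclos p a (phi x y)
| Bclos_psi : forall x, Bclos p a x -> x < a -> Bclos p a (p x).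

Definition psi : O -> O := epsilon inhF1 (fun p =>
  forall a, p a = omin (fun r => r < Omega U /\ ~ Bclos p a r)).

Definition B (a : O) : O -> Prop := Bclos psi a.

Definition H (eta : O) (X : O -> Prop) : O -> Prop :=
  fun g => forall a, (forall x, X x -> B a x) -> eta < a -> B a g.

Definition eps_Omega1 : O := omin (fun e => Omega U < e /\ oexp e = e).

Definition hat (eta b : O) : O := oadd eta (oexp (oadd (Omega U) b)).

End Ordinals.

(* Main.v *)
Require Import Defs.
From Stdlib Require Import ClassicalEpsilon Classical FunctionalExtensionality PropExtensionality.
From Stdlib Require Cantor.

Section Aux.
Variable U : OrdUniverse.
Local Notation O := (carrier U).
Local Notation "x <o y" := (olt U x y) (at level 70).
Local Notation "x <=o y" := (ole U x y) (at level 70).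

Lemma lt_irrefl x : ~ x <o x.
Proof. induction x using (well_founded_ind (olt_wf U)). intro h. exact (H x h h). Qed.

Lemma lt_asym x y : x <o y -> y <o x -> False.
Proof. intros h1 h2. exact (lt_irrefl x (olt_trans U _ _ _ h1 h2)). Qed.

Lemma le_refl x : x <=o x. Proof. right; reflexivity. Qed.

Lemma le_lt_trans x y z : x <=o y -> y <o z -> x <o z.
Proof. intros [h| ->] h2; [exact (olt_trans U _ _ _ h h2)|exact h2]. Qed.

Lemma lt_le_trans x y z : x <o y -> y <=o z -> x <o z.
Proof. intros h [h2| <-]; [exact (olt_trans U _ _ _ h h2)|exact h]. Qed.

Lemma le_trans x y z : x <=o y -> y <=o z -> x <=o z.
Proof. intros [h| ->] h2; [left; exact (lt_le_trans _ _ _ h h2)|exact h2]. Qed.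

Lemma le_not_lt x y : x <=o y -> ~ y <o x.
Proof. intros [h| ->] h2; [exact (lt_asym _ _ h h2)|exact (lt_irrefl _ h2)]. Qed.

Lemma not_lt_le x y : ~ y <o x -> x <=o y.
Proof. intro h. destruct (olt_total U x y) as [h1|[h1|h1]]; [left; exact h1| right; exact h1| contradiction]. Qed.

Lemma least_exists (P : O -> Prop) x : P x -> exists m, P m /\ forall y, P y -> m <=o y.
Proof.
  induction x as [x IH] using (well_founded_ind (olt_wf U)). intro Px.
  destruct (classic (exists y, y <o x /\ P y)) as [[y [hy Py]]|hn].
  - exact (IH y hy Py).
  - exists x. split; [exact Px|]. intros y Py. apply not_lt_le. intro h. apply hn. eauto.
Qed.

Lemma omin_spec (P : O -> Prop) : (exists x, P x) -> P (omin U P) /\ forall y, P y -> omin U P <=o y.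
Proof.
  intros [x Px]. unfold omin. apply (epsilon_spec (inhO U) (fun x => P x /\ forall y, P y -> x <=o y)).
  exact (least_exists P x Px).
Qed.

Lemma zero_le x : ozero U <=o x.
Proof. apply (proj2 (omin_spec (fun _ => True) (ex_intro _ x I))). exact I. Qed.

Lemma below_Omega : exists y, y <o Omega U.
Proof.
  apply NNPP. intro hn. apply (Omega_uncountable U). exists (fun _ => 0).
  intros y z hy. exfalso. apply hn. eauto.
Qed.

Lemma exists_above x : exists y, x <o y.
Proof.
  destruct below_Omega as [y hy]. destruct (olt_regular U (Omega U) (fun _ => x)) as [b hb].
  exists b. exact (hb y hy).
Qed.

Lemma succ_spec x : x <o osucc U x /\ forall y, x <o y -> osucc U x <=o y.
Proof. apply omin_spec. apply exists_above. Qed.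

Lemma lt_succ x : x <o osucc U x. Proof. apply succ_spec. Qed.
Lemma succ_least x y : x <o y -> osucc U x <=o y. Proof. apply succ_spec. Qed.

Lemma lt_succ_le x y : y <o osucc U x -> y <=o x.
Proof. intro h. apply not_lt_le. intro h2. exact (le_not_lt _ _ (succ_least _ _ h2) h). Qed.

Lemma succ_mono x y : x <o y -> osucc U x <o osucc U y.
Proof. intro h. exact (le_lt_trans _ _ _ (succ_least _ _ h) (lt_succ y)). Qed.

Lemma succ_inj x y : osucc U x = osucc U y -> x = y.
Proof.
  intro e. destruct (olt_total U x y) as [h|[h|h]]; auto.
  - pose proof (succ_mono _ _ h) as h'. rewrite e in h'. destruct (lt_irrefl _ h').
  - pose proof (succ_mono _ _ h) as h'. rewrite e in h'. destruct (lt_irrefl _ h').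
Qed.

Lemma succ_ne_zero x : osucc U x <> ozero U.
Proof. intro e. pose proof (lt_succ x) as h. rewrite e in h. exact (le_not_lt _ _ (zero_le x) h). Qed.

Lemma limit_succ_lt b c : is_limit U b -> c <o b -> osucc U c <o b.
Proof.
  intros [_ hl] h. destruct (succ_least _ _ h) as [h'|h']; [exact h'|]. exfalso. exact (hl c (eq_sym h')).
Qed.

Lemma zero_lt_limit b : is_limit U b -> ozero U <o b.
Proof.
  intros [hz _]. destruct (zero_le b) as [h|h]; [exact h|]. exfalso; exact (hz (eq_sym h)).
Qed.

Definition fam (f : O -> O) (b : O) := fun g => exists c, c <o b /\ g = f c.

Lemma osup_spec f b :
  (forall c, c <o b -> f c <=o osup U (fam f b)) /\
  (forall u, (forall c, c <o b -> f c <=o u) -> osup U (fam f b) <=o u).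
Proof.
  assert (hs := omin_spec (fun u => forall g, fam f b g -> g <=o u)).
  destruct hs as [h1 h2].
  - destruct (olt_regular U b f) as [B hB]. exists B. intros g [c [hc ->]]. left. exact (hB c hc).
  - split.
    + intros c hc. apply h1. exists c; auto.
    + intros u hu. apply h2. intros g [c [hc ->]]. exact (hu c hc).
Qed.

Lemma Omega_limit : is_limit U (Omega U).
Proof.
  split.
  - intro e. destruct below_Omega as [y hy]. rewrite e in hy. exact (le_not_lt _ _ (zero_le y) hy).
  - intros c e. apply (Omega_uncountable U).
    assert (hc : c <o Omega U) by (rewrite e; apply lt_succ).
    destruct (Omega_least U c hc) as [g hg].
    exists (fun y => match excluded_middle_informative (y = c) with left _ => 0 | right _ => S (g y) end).
    intros y z hy hz.
    rewrite e in hy, hz. apply lt_succ_le in hy. apply lt_succ_le in hz.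
    destruct (excluded_middle_informative (y = c)); destruct (excluded_middle_informative (z = c));
      intro E; try congruence.
    injection E; intro E'. destruct hy as [hy|hy]; [|contradiction]. destruct hz as [hz|hz]; [|contradiction].
    exact (hg y z hy hz E').
Qed.

Lemma omega_limit : is_limit U (oomega U).
Proof. apply (omin_spec (is_limit U)). exists (Omega U). apply Omega_limit. Qed.

Lemma wf_rec_exists (T : Type) (t0 : T) (G : (O -> T) -> O -> T)
  (HG : forall f g x, (forall y, y <o x -> f y = g y) -> G f x = G g x) :
  exists f, forall x, f x = G f x.
Proof.
  set (F := fun x (h : forall y, y <o x -> T) =>
    G (fun y => match excluded_middle_informative (y <o x) with left H => h y H | right _ => t0 end) x).
  assert (HF : forall x (f g : forall y, y <o x -> T), (forall y (p : y <o x), f y p = g y p) -> F x f = F x g).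
  { intros x f g Hfg. unfold F. apply HG. intros y hy.
    destruct (excluded_middle_informative (y <o x)); auto. }
  set (f := Fix (olt_wf U) (fun _ => T) F).
  exists f. intro x.
  transitivity (F x (fun y _ => f y)).
  - apply (Fix_eq (olt_wf U) (fun _ => T) F HF).
  - unfold F. apply HG. intros y hy. destruct (excluded_middle_informative (y <o x)); [reflexivity|contradiction].
Qed.

Definition dec (P : Prop) := excluded_middle_informative P.

Lemma rec3 (z : O) (s : O -> O) : exists f : O -> O,
  f (ozero U) = z /\ (forall c, f (osucc U c) = s (f c)) /\
  (forall b, is_limit U b -> f b = osup U (fun g => exists c, c <o b /\ g = f c)).
Proof.
  set (pr := fun b => epsilon (inhO U) (fun c => b = osucc U c)).
  set (G := fun (f : O -> O) b =>
    if dec (b = ozero U) then z else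
    if dec (exists c, b = osucc U c) then s (f (pr b))
    else osup U (fun g => exists c, c <o b /\ g = f c)).
  destruct (wf_rec_exists O z G) as [f hf].
  - intros f g x Hfg. unfold G.
    destruct (dec (x = ozero U)); [reflexivity|].
    destruct (dec (exists c, x = osucc U c)) as [e|ne].
    + f_equal. apply Hfg. pose proof (epsilon_spec (inhO U) (fun c => x = osucc U c) e) as E.
      apply (lt_le_trans _ (osucc U (pr x))); [apply lt_succ|right; symmetry; exact E].
    + f_equal. apply functional_extensionality; intro g0. apply propositional_extensionality.
      split; intros [c [hc ->]]; exists c; split; auto; first [apply Hfg; auto | symmetry; apply Hfg; auto].
  - exists f. split; [|split].
    + rewrite hf. unfold G. destruct (dec (ozero U = ozero U)); [reflexivity|congruence].
    + intro c. rewrite hf. unfold G. destruct (dec (osucc U c = ozero U)) as [e|_].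
      { destruct (succ_ne_zero _ e). }
      destruct (dec (exists c0, osucc U c = osucc U c0)) as [e|ne].
      * f_equal. f_equal. symmetry. apply succ_inj.
        exact (epsilon_spec (inhO U) (fun c0 => osucc U c = osucc U c0) e).
      * exfalso. apply ne. eauto.
    + intros b [hz hl]. rewrite hf. unfold G. destruct (dec (b = ozero U)); [contradiction|].
      destruct (dec (exists c, b = osucc U c)) as [[c e]|_]; [destruct (hl c e)|reflexivity].
Qed.

Definition spec3 z s (f : O -> O) :=
  f (ozero U) = z /\ (forall c, f (osucc U c) = s (f c)) /\
  (forall b, is_limit U b -> f b = osup U (fun g => exists c, c <o b /\ g = f c)).

Lemma oadd_ok a : spec3 a (osucc U) (oadd U a).
Proof.
  revert a. unfold oadd.
  match goal with |- forall a, spec3 _ _ (epsilon ?i ?P a) => apply (epsilon_spec i P) end.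
  exists (fun a => epsilon (inhF1 U) (spec3 a (osucc U))). intro a.
  exact (epsilon_spec (inhF1 U) (spec3 a (osucc U)) (rec3 a (osucc U))).
Qed.

Lemma omul_ok a : spec3 (ozero U) (fun v => oadd U v a) (omul U a).
Proof.
  revert a. unfold omul.
  match goal with |- forall a, spec3 _ _ (epsilon ?i ?P a) => apply (epsilon_spec i P) end.
  exists (fun a => epsilon (inhF1 U) (spec3 (ozero U) (fun v => oadd U v a))). intro a.
  exact (epsilon_spec (inhF1 U) _ (rec3 (ozero U) (fun v => oadd U v a))).
Qed.

Lemma oexp_ok : spec3 (oone U) (fun v => omul U v (oomega U)) (oexp U).
Proof.
  unfold oexp.
  exact (epsilon_spec (inhF1 U) (spec3 (oone U) (fun v => omul U v (oomega U))) (rec3 _ _)).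
Qed.

Lemma phi_zero : phi U (ozero U) = oexp U.
Proof.
  assert (H : exists F : O -> O -> O, F (ozero U) = oexp U /\
    forall x, ozero U <o x -> F x = oenum U (fun g => forall z, z <o x -> F z g = g)).
  { destruct (wf_rec_exists (O -> O) (fun x => x)
      (fun F x => if dec (x = ozero U) then oexp U else oenum U (fun g => forall z, z <o x -> F z g = g)))
      as [F hF].
    - intros f g x Hfg. destruct (dec (x = ozero U)); [reflexivity|].
      f_equal. apply functional_extensionality; intro g0. apply propositional_extensionality.
      split; intros h z hz; [rewrite <- (Hfg z hz)|rewrite (Hfg z hz)]; auto.
    - exists F. split.
      + rewrite hF. destruct (dec (ozero U = ozero U)); congruence.
      + intros x hx. rewrite hF. destruct (dec (x = ozero U)) as [e|_]; [|reflexivity].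
        rewrite e in hx. destruct (lt_irrefl _ hx). }
  unfold phi.
  match goal with |- epsilon ?i ?P _ = _ => exact (proj1 (epsilon_spec i P H)) end.
Qed.

Lemma add_zero a : oadd U a (ozero U) = a. Proof. apply (oadd_ok a). Qed.
Lemma add_succ a c : oadd U a (osucc U c) = osucc U (oadd U a c). Proof. apply (oadd_ok a). Qed.
Lemma add_lim a b : is_limit U b -> oadd U a b = osup U (fam (oadd U a) b). Proof. apply (oadd_ok a). Qed.

Lemma case3 (b : O) : b = ozero U \/ (exists c, b = osucc U c) \/ is_limit U b.
Proof.
  destruct (classic (b = ozero U)); auto.
  destruct (classic (exists c, b = osucc U c)); auto.
  right; right. split; auto. intros c e. apply H0; eauto.
Qed.

Lemma add_strict a b c : b <o c -> oadd U a b <o oadd U a c.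
Proof.
  revert b. induction c as [c IH] using (well_founded_ind (olt_wf U)). intros b hb.
  destruct (case3 c) as [->|[[c' ->]|hl]].
  - destruct (le_not_lt _ _ (zero_le b) hb).
  - rewrite add_succ. apply lt_succ_le in hb.
    apply (le_lt_trans _ (oadd U a c')); [|apply lt_succ].
    destruct hb as [hb| ->]; [left; apply IH; auto; apply lt_succ|apply le_refl].
  - rewrite (add_lim a c hl).
    apply (lt_le_trans _ (oadd U a (osucc U b))).
    + rewrite add_succ. apply lt_succ.
    + apply (proj1 (osup_spec _ _)). apply limit_succ_lt; auto.
Qed.

Lemma add_le a b c : b <=o c -> oadd U a b <=o oadd U a c.
Proof. intros [h| ->]; [left; apply add_strict; auto|apply le_refl]. Qed.

Lemma le_add_r a b : b <=o oadd U a b.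
Proof.
  induction b as [b IH] using (well_founded_ind (olt_wf U)).
  destruct (case3 b) as [->|[[c ->]|hl]].
  - apply zero_le.
  - rewrite add_succ. destruct (IH c (lt_succ c)) as [h|h].
    + left. apply succ_mono; auto.
    + rewrite <- h. apply le_refl.
  - apply not_lt_le. intro h. set (s := oadd U a b) in *.
    assert (hs : osucc U s <o b) by (apply limit_succ_lt; auto).
    assert (h1 : osucc U s <=o oadd U a (osucc U s)) by (apply IH; auto).
    assert (h2 : oadd U a (osucc U s) <=o s).
    { apply (le_trans _ (osup U (fam (oadd U a) b))); [apply (proj1 (osup_spec _ _)); auto|].
      right. symmetry. apply add_lim; auto. }
    apply (le_not_lt _ _ (le_trans _ _ _ h1 h2) (lt_succ s)).
Qed.

Lemma mul_zero a : omul U a (ozero U) = ozero U. Proof. apply (omul_ok a). Qed.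
Lemma mul_succ a c : omul U a (osucc U c) = oadd U (omul U a c) a. Proof. apply (omul_ok a). Qed.
Lemma mul_lim a b : is_limit U b -> omul U a b = osup U (fam (omul U a) b). Proof. apply (omul_ok a). Qed.

Lemma mul_omega_gt x : ozero U <o x -> x <o omul U x (oomega U).
Proof.
  intro hx.
  set (two := osucc U (osucc U (ozero U))).
  assert (h2 : two <o oomega U).
  { unfold two. apply limit_succ_lt; [apply omega_limit|].
    apply limit_succ_lt; [apply omega_limit|]. apply zero_lt_limit, omega_limit. }
  rewrite (mul_lim x _ omega_limit).
  apply (lt_le_trans _ (omul U x two)); [|apply (proj1 (osup_spec _ _)); auto].
  unfold two. rewrite !mul_succ, mul_zero.
  set (y := oadd U (ozero U) x).
  apply (le_lt_trans _ y); [apply le_add_r|].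
  rewrite <- (add_zero y) at 1. apply add_strict. auto.
Qed.

Lemma exp_zero : oexp U (ozero U) = oone U. Proof. apply oexp_ok. Qed.
Lemma exp_succ c : oexp U (osucc U c) = omul U (oexp U c) (oomega U). Proof. apply oexp_ok. Qed.
Lemma exp_lim b : is_limit U b -> oexp U b = osup U (fam (oexp U) b). Proof. apply oexp_ok. Qed.

Lemma exp_pos b : ozero U <o oexp U b.
Proof.
  induction b as [b IH] using (well_founded_ind (olt_wf U)).
  destruct (case3 b) as [->|[[c ->]|hl]].
  - rewrite exp_zero. apply lt_succ.
  - rewrite exp_succ. apply (olt_trans U _ (oexp U c)); [apply IH, lt_succ|].
    apply mul_omega_gt. apply IH, lt_succ.
  - rewrite (exp_lim b hl). apply (lt_le_trans _ (oexp U (ozero U))).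
    + rewrite exp_zero. apply lt_succ.
    + apply (proj1 (osup_spec _ _)). apply zero_lt_limit; auto.
Qed.

Lemma exp_strict b c : b <o c -> oexp U b <o oexp U c.
Proof.
  revert b. induction c as [c IH] using (well_founded_ind (olt_wf U)). intros b hb.
  destruct (case3 c) as [->|[[c' ->]|hl]].
  - destruct (le_not_lt _ _ (zero_le b) hb).
  - rewrite exp_succ. apply lt_succ_le in hb.
    apply (le_lt_trans _ (oexp U c')); [|apply mul_omega_gt, exp_pos].
    destruct hb as [hb| ->]; [left; apply IH; auto; apply lt_succ|apply le_refl].
  - rewrite (exp_lim c hl).
    apply (lt_le_trans _ (oexp U (osucc U b))).
    + rewrite exp_succ. apply mul_omega_gt, exp_pos.
    + apply (proj1 (osup_spec _ _)). apply limit_succ_lt; auto.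
Qed.

Lemma Bclos_ext (f g : O -> O) a r : (forall y, y <o a -> f y = g y) -> Bclos U f a r -> Bclos U g a r.
Proof.
  intros Hfg H. induction H.
  - apply Bclos_zero.
  - apply Bclos_Omega.
  - apply Bclos_add; auto.
  - apply Bclos_phi; auto.
  - rewrite (Hfg x H0). apply Bclos_psi; auto.
Qed.

Lemma psi_eq a : psi U a = omin U (fun r => r <o Omega U /\ ~ B U a r).
Proof.
  assert (H : exists p : O -> O, forall a, p a = omin U (fun r => r <o Omega U /\ ~ Bclos U p a r)).
  { apply (wf_rec_exists O (ozero U)). intros f g x Hfg. f_equal.
    apply functional_extensionality; intro r. apply propositional_extensionality.
    split; intros [h1 h2]; split; auto; intro h3; apply h2.
    - apply (Bclos_ext g f); auto. intros y hy; symmetry; auto.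
    - apply (Bclos_ext f g); auto. }
  unfold B. revert a. unfold psi.
  match goal with |- forall a, epsilon ?i ?P a = _ => exact (epsilon_spec i P H) end.
Qed.

Lemma B_mono a b r : a <=o b -> B U a r -> B U b r.
Proof.
  intros hab H. induction H.
  - apply Bclos_zero.
  - apply Bclos_Omega.
  - apply Bclos_add; auto.
  - apply Bclos_phi; auto.
  - apply Bclos_psi; auto. exact (lt_le_trans _ _ _ H0 hab).
Qed.

Inductive tm := T0 | TOm | Tadd (t u : tm) | Tphi (t u : tm) | Tpsi (t : tm).

Fixpoint enc (t : tm) : nat :=
  match t with
  | T0 => Cantor.to_nat (0, 0)
  | TOm => Cantor.to_nat (1, 0)
  | Tadd t u => Cantor.to_nat (2, Cantor.to_nat (enc t, enc u))
  | Tphi t u => Cantor.to_nat (3, Cantor.to_nat (enc t, enc u))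
  | Tpsi t => Cantor.to_nat (4, enc t)
  end.

Lemma to_nat_inj p q : Cantor.to_nat p = Cantor.to_nat q -> p = q.
Proof. intro e. rewrite <- (Cantor.cancel_of_to p), <- (Cantor.cancel_of_to q), e. reflexivity. Qed.

Lemma pair_inj k m k' m' : Cantor.to_nat (k,m) = Cantor.to_nat (k',m') -> k = k' /\ m = m'.
Proof. intro e. apply to_nat_inj in e. inversion e; auto. Qed.

Lemma enc_inj t u : enc t = enc u -> t = u.
Proof.
  revert u. induction t; destruct u; intro e; try reflexivity; cbn [enc] in e;
    apply pair_inj in e; destruct e as [e1 e2]; try discriminate.
  - apply pair_inj in e2. destruct e2. f_equal; auto.
  - apply pair_inj in e2. destruct e2. f_equal; auto.
  - f_equal; auto.
Qed.

Inductive Ev (a : O) : tm -> O -> Prop :=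
| Ev0 : Ev a T0 (ozero U)
| EvOm : Ev a TOm (Omega U)
| Evadd : forall t u x y, Ev a t x -> Ev a u y -> Ev a (Tadd t u) (oadd U x y)
| Evphi : forall t u x y, Ev a t x -> Ev a u y -> Ev a (Tphi t u) (phi U x y)
| Evpsi : forall t x, Ev a t x -> x <o a -> Ev a (Tpsi t) (psi U x).

Lemma Ev_fun a t x : Ev a t x -> forall y, Ev a t y -> x = y.
Proof.
  induction 1; intros z hz; inversion hz; subst; auto;
    f_equal; auto.
Qed.

Lemma B_Ev a r : B U a r -> exists t, Ev a t r.
Proof.
  intro H. induction H.
  - exists T0; constructor.
  - exists TOm; constructor.
  - destruct IHBclos1 as [t ht], IHBclos2 as [u hu]. exists (Tadd t u); constructor; auto.
  - destruct IHBclos1 as [t ht], IHBclos2 as [u hu]. exists (Tphi t u); constructor; auto.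
  - destruct IHBclos as [t ht]. exists (Tpsi t); constructor; auto.
Qed.

Lemma B_nonfull a : exists r, r <o Omega U /\ ~ B U a r.
Proof.
  apply NNPP. intro hn. apply (Omega_uncountable U).
  assert (hall : forall r, r <o Omega U -> exists t, Ev a t r).
  { intros r hr. apply B_Ev. apply NNPP. intro h. apply hn. eauto. }
  exists (fun r => enc (epsilon (inhabits T0) (fun t => Ev a t r))).
  intros y z hy hz e. apply enc_inj in e.
  pose proof (epsilon_spec (inhabits T0) (fun t => Ev a t y) (hall y hy)) as Ey.
  pose proof (epsilon_spec (inhabits T0) (fun t => Ev a t z) (hall z hz)) as Ez.
  simpl in Ey, Ez. rewrite e in Ey. exact (Ev_fun _ _ _ Ey _ Ez).
Qed.

Lemma psi_spec a : (psi U a <o Omega U /\ ~ B U a (psi U a)) /\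
  forall r, r <o Omega U -> ~ B U a r -> psi U a <=o r.
Proof.
  rewrite psi_eq. destruct (omin_spec _ (B_nonfull a)) as [h1 h2]. split; auto.
Qed.

Lemma eta_lt_hat eta b : eta <o hat U eta b.
Proof.
  unfold hat. rewrite <- (add_zero eta) at 1. apply add_strict, exp_pos.
Qed.

Lemma hat_strict eta b c : b <o c -> hat U eta b <o hat U eta c.
Proof. intro h. unfold hat. apply add_strict, exp_strict, add_strict. exact h. Qed.

Lemma hat_in_B eta b a : B U a eta -> B U a b -> B U a (hat U eta b).
Proof.
  intros he hb. unfold hat. apply Bclos_add; auto. rewrite <- phi_zero.
  apply Bclos_phi; [apply Bclos_zero|]. apply Bclos_add; auto. apply Bclos_Omega.
Qed.

End Aux.

Theorem lemma2p20 (U : OrdUniverse) (eta : U)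
  (Heta_B : B U (eps_Omega1 U) eta)
  (Heta : H U eta (fun _ => False) eta) :
  (forall alpha : U,
      B U (eps_Omega1 U) alpha ->
      H U eta (fun _ => False) alpha ->
      H U (hat U eta alpha) (fun _ => False) (hat U eta alpha) /\
      H U (hat U eta alpha) (fun _ => False) (psi U (hat U eta alpha))) /\
  (forall alpha0 alpha : U,
      B U (eps_Omega1 U) alpha0 ->
      B U (eps_Omega1 U) alpha ->
      H U eta (fun _ => False) alpha0 ->
      olt U alpha0 alpha ->
      olt U (psi U (hat U eta alpha0)) (psi U (hat U eta alpha))).
Proof.
  assert (key : forall alpha a, H U eta (fun _ => False) alpha -> olt U (hat U eta alpha) a ->
             B U a (hat U eta alpha)).
  { intros alpha a Ha hlt.
    assert (hea : olt U eta a) by exact (olt_trans U _ _ _ (eta_lt_hat U eta alpha) hlt).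
    apply hat_in_B; [apply Heta|apply Ha]; auto; intros x [] . }
  split.
  - intros alpha _ Ha. split.
    + intros a _ hlt. apply key; auto.
    + intros a _ hlt. apply Bclos_psi; auto. apply key; auto.
  - intros alpha0 alpha _ _ Ha0 hlt.
    set (h0 := hat U eta alpha0). set (h := hat U eta alpha).
    assert (hh : olt U h0 h) by (apply hat_strict; auto).
    assert (hin : B U h (psi U h0)) by (apply Bclos_psi; auto; apply key; auto).
    destruct (psi_spec U h) as [[hO hn] _].
    destruct (psi_spec U h0) as [_ hmin].
    destruct (olt_total U (psi U h0) (psi U h)) as [r|[r|r]]; auto.
    + exfalso. apply hn. rewrite <- r. exact hin.
    + exfalso. assert (hle : ole U (psi U h0) (psi U h)).
      { apply hmin; auto. intro hb. apply hn. apply (B_mono U h0 h); auto. left; auto. }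
      exact (le_not_lt U _ _ hle r).
Qed.
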